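(* Consider an $n$-th order strictly proper SISO system with transfer function \[ P(s)=\frac{y(s)}{u(s)}=\frac{b_1s^{n-1}+\dots+b_{n-1}s+b_n}{s^n+a_1s^{n-1}+\dots+a_{n-1}s+a_n}, \] with unknown coefficients $a_i\in[\underline a_i,\bar a_i]$ and $b_j\in[\underline b_j,\bar b_j]$ for $i,j=1,\dots,n$. Let $c_0=[1,0,\dots,0]$ and let $A_0\in\mathbb{R}^{n\times n}$ be a strictly stable matrix in observable canonical form with characteristic polynomial $s^n+\hat a_1s^{n-1}+\dots+\hat a_n$ (ones on the superdiagonal, first column $-[\hat a_1,\dots,\hat a_n]^T$, zeros elsewhere). Realize the system as $\dot x=A_0x+b_yy+b_uu$, $y=c_0x$, with $b_y=[\hat a_1-a_1,\dots,\hat a_n-a_n]^T$ and $b_u=[b_1,\dots,b_n]^T$. Let $\theta_y,\theta_u$ satisfy $\dot\theta_y=A_0^T\theta_y+c_0^Ty$, $\dot\theta_u=A_0^T\theta_u+c_0^Tu$; let $C_0$ be the observability matrix of $(c_0,A_0)$ (rows $c_0A_0^{k}$, $k=0,\dots,n-1$), $\Theta_y,\Theta_u$ the controllability matrices $[\theta,A_0^T\theta,\dots,(A_0^T)^{n-1}\theta]$ for $\theta=\theta_y,\theta_u$, and $E_y=C_0^{-1}\Theta_y^T$, $E_u=C_0^{-1}\Theta_u^T$. For parameter vectors define $\hat x(b_y,b_u)=E_yb_y+E_ub_u$, and let $\hat x(b_{yi},b_{ui})$, $i=1,\dots,N$, be all the vertices of the convex hull of the points $E_y[\hat a_1-a_1,\dots,\hat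 a_n-a_n]^T+E_u[b_1,\dots,b_n]^T$ with $a_i\in\{\underline a_i,\bar a_i\}$, $b_j\in\{\underline b_j,\bar b_j\}$. Let $\epsilon_0=x(0)-\hat x(0)$, where $\hat x$ is evaluated at the true coefficients. Let $Q\succ0$ and $\|x\|_q=(x^TQ^{-1}x)^{1/2}$. If \[ A_0Q+QA_0^T+2\alpha Q\preceq 0, \] then for every $t\ge0$ there exists $i\in\{1,\dots,N\}$ such that \[ \|x(t)\|_q\le\|\hat x(b_{yi},b_{ui})(t)\|_q+e^{-\alpha t}\|\epsilon_0\|_q . \]
   Context: $\hat x(b_{yi},b_{ui})(t)$ denotes $E_y(t)b_{yi}+E_u(t)b_{ui}$, computable from the measured $u,y$ through the filters. *)

(* Defs.v *)
From HB Require Import structures.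
From mathcomp Require Import all_boot all_order all_algebra.
From mathcomp Require Import all_classical all_reals all_analysis.
From mathcomp Require Import complex.
Set Implicit Arguments. Unset Strict Implicit. Unset Printing Implicit Defensive.
Import Order.TTheory GRing.Theory Num.Theory.
Import numFieldNormedType.Exports.
Local Open Scope ring_scope.
Local Open Scope classical_set_scope.

Section Defs.
Variables (R : realType) (n : nat).

(* c0 = [1, 0, ..., 0] (a row vector); needs n > 0 to be meaningful. *)
Definition c0 : 'rV[R]_n := \row_(j < n) (if (j : nat) == 0%N then 1 else 0).

(* Observable canonical form with characteristic polynomial
   s^n + ahat_1 s^(n-1) + ... + ahat_n  (index k : 'I_n stands for ahat_(k+1)):
   first column -ahat, ones on the superdiagonal, zeros elsewhere. *)
Definition A0 (ahat : 'cV[R]_n) : 'M[R]_n :=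
  \matrix_(i < n, j < n)
    (if (j : nat) == 0%N then - ahat i 0
     else if (j : nat) == i.+1 then 1 else 0).

Definition strictly_stable (A : 'M[R]_n) : Prop :=
  forall z : R[i], root (map_poly (fun r : R => (r%:C)%C) (char_poly A)) z ->
    complex.Re z < 0.

Definition obsv_mx (c : 'rV[R]_n) (A : 'M[R]_n) : 'M[R]_n :=
  \matrix_(k < n, j < n) (c *m A ^+ k) 0 j.

Definition ctrb_mx (A : 'M[R]_n) (th : 'cV[R]_n) : 'M[R]_n :=
  \matrix_(i < n, k < n) ((A^T) ^+ k *m th) i 0.

Definition Emx (ahat : 'cV[R]_n) (th : 'cV[R]_n) : 'M[R]_n :=
  invmx (obsv_mx c0 (A0 ahat)) *m (ctrb_mx (A0 ahat) th)^T.

Definition xhat (ahat thy thu by_ bu : 'cV[R]_n) : 'cV[R]_n :=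
  Emx ahat thy *m by_ + Emx ahat thu *m bu.

Definition posdef (Q : 'M[R]_n) : Prop :=
  Q^T = Q /\ forall v : 'cV[R]_n, v != 0 -> 0 < (v^T *m Q *m v) 0 0.

Definition negsemidef (M : 'M[R]_n) : Prop :=
  M^T = M /\ forall v : 'cV[R]_n, (v^T *m M *m v) 0 0 <= 0.

Definition qnorm (Q : 'M[R]_n) (v : 'cV[R]_n) : R :=
  Num.sqrt ((v^T *m invmx Q *m v) 0 0).

Definition conv_hull (S : set 'cV[R]_n) : set 'cV[R]_n :=
  [set p | exists (m : nat) (w : 'I_m -> R) (v : 'I_m -> 'cV[R]_n),
     (forall k, 0 <= w k) /\ \sum_(k < m) w k = 1 /\ (forall k, S (v k)) /\
     p = \sum_(k < m) w k *: v k].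

Definition vertex_of (C : set 'cV[R]_n) (p : 'cV[R]_n) : Prop :=
  C p /\ forall (u v : 'cV[R]_n) (l : R), C u -> C v -> 0 < l < 1 ->
    p = l *: u + (1 - l) *: v -> u = p /\ v = p.

Definition corner_points (ahat thy thu alo ahi blo bhi : 'cV[R]_n)
  : set 'cV[R]_n :=
  [set p | exists a b : 'cV[R]_n,
     (forall i, a i 0 = alo i 0 \/ a i 0 = ahi i 0) /\
     (forall j, b j 0 = blo j 0 \/ b j 0 = bhi j 0) /\
     p = xhat ahat thy thu (ahat - a) b].

End Defs.

(* Main.v *)
Require Import Defs.
From HB Require Import structures.
From mathcomp Require Import all_boot all_order all_algebra.
From mathcomp Require Import all_classical all_reals all_analysis.
From mathcomp Require Import complex.
From mathcomp Require Import ring lra.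
Import Order.TTheory GRing.Theory Num.Theory.
Import numFieldNormedType.Exports.
Local Open Scope ring_scope.
Local Open Scope classical_set_scope.


Module Part1.
Import Order.TTheory GRing.Theory Num.Theory.
Import numFieldNormedType.Exports.
Set Implicit Arguments. Unset Strict Implicit. Unset Printing Implicit Defensive.
Local Open Scope ring_scope.

Section QF.
Variables (R : realType) (n : nat) (P : 'M[R]_n).
Hypotheses (Psym : P^T = P)
  (Ppos : forall v : 'cV[R]_n, v != 0 -> 0 < (v^T *m P *m v) 0 0).

Definition Bf (v w : 'cV[R]_n) : R := (v^T *m P *m w) 0 0.
Definition Nf (v : 'cV[R]_n) : R := Num.sqrt (Bf v v).

Lemma BDl u v w : Bf (u + v) w = Bf u w + Bf v w.
Proof. by rewrite /Bf linearD /= !mulmxDl mxE. Qed.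
Lemma BDr u v w : Bf w (u + v) = Bf w u + Bf w v.
Proof. by rewrite /Bf !mulmxDr mxE. Qed.
Lemma BZl c u w : Bf (c *: u) w = c * Bf u w.
Proof. by rewrite /Bf linearZ /= -!scalemxAl mxE. Qed.
Lemma BZr c u w : Bf w (c *: u) = c * Bf w u.
Proof. by rewrite /Bf -!scalemxAr mxE. Qed.
Lemma Bsym u v : Bf u v = Bf v u.
Proof.
rewrite /Bf; have -> : (u^T *m P *m v) 0 0 = ((u^T *m P *m v)^T) 0 0 by rewrite [RHS]mxE.
by rewrite !trmx_mul trmxK Psym mulmxA.
Qed.
Lemma BNl u w : Bf (- u) w = - Bf u w.
Proof. by rewrite -scaleN1r BZl mulN1r. Qed.
Lemma BNr u w : Bf w (- u) = - Bf w u.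
Proof. by rewrite -scaleN1r BZr mulN1r. Qed.
Lemma B0l w : Bf 0 w = 0.
Proof. by rewrite /Bf linear0 !mul0mx mxE. Qed.
Lemma Bge0 v : 0 <= Bf v v.
Proof. by case: (eqVneq v 0) => [->|/Ppos/ltW//]; rewrite B0l. Qed.
Lemma Beq0 v : Bf v v = 0 -> v = 0.
Proof. by case: (eqVneq v 0) => // /Ppos; rewrite /Bf => /gt_eqF/eqP. Qed.

Lemma Nge0 v : 0 <= Nf v. Proof. exact: sqrtr_ge0. Qed.
Lemma NsqE v : Nf v ^+ 2 = Bf v v. Proof. by rewrite sqr_sqrtr // Bge0. Qed.
Lemma NZ c v : Nf (c *: v) = `|c| * Nf v.
Proof.
by rewrite /Nf BZl BZr mulrA -expr2 sqrtrM ?sqr_ge0 // sqrtr_sqr.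
Qed.

Lemma BDD u v : Bf (u + v) (u + v) = Bf u u + 2 * Bf u v + Bf v v.
Proof. rewrite BDl !BDr (Bsym v u); ring. Qed.

Lemma CS u v : Bf u v ^+ 2 <= Bf u u * Bf v v.
Proof.
case: (eqVneq v 0) => [->|vn0].
  by rewrite (Bsym u 0) !B0l expr2 !mul0r mulr0.
have hv := Ppos vn0; rewrite -/(Bf v v) in hv.
have := Bge0 (Bf v v *: u - Bf u v *: v).
rewrite BDl !BDr !BNl !BNr !BZl !BZr (Bsym v u) => h.
have h2 : 0 <= Bf v v * (Bf v v * Bf u u - Bf u v ^+ 2) by nra.
rewrite pmulr_rge0 // subr_ge0 in h2.
by rewrite mulrC.
Qed.

Lemma BleN u v : Bf u v <= Nf u * Nf v.
Proof.
apply: le_trans (ler_norm _) _.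
rewrite -sqrtr_sqr -[Nf u * Nf v]ger0_norm ?mulr_ge0 ?Nge0 // -sqrtr_sqr.
by rewrite ler_sqrt ?sqr_ge0 // exprMn !NsqE; exact: CS.
Qed.

Lemma ND u v : Nf (u + v) <= Nf u + Nf v.
Proof.
rewrite {1}/Nf -(ger0_norm (addr_ge0 (Nge0 u) (Nge0 v))) -sqrtr_sqr ler_sqrt ?sqr_ge0 //.
rewrite BDD; have := BleN u v; rewrite -!NsqE; nra.
Qed.

Lemma N0 : Nf 0 = 0. Proof. by rewrite /Nf B0l sqrtr0. Qed.

Lemma Nsum m (w : 'I_m -> R) (v : 'I_m -> 'cV[R]_n) :
  (forall k, 0 <= w k) ->
  Nf (\sum_(k < m) w k *: v k) <= \sum_(k < m) w k * Nf (v k).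
Proof.
move=> w0.
apply: (big_ind2 (fun a b => Nf a <= b)) => [|a1 b1 a2 b2 h1 h2|k _].
- by rewrite N0.
- exact: le_trans (ND _ _) (lerD h1 h2).
- by rewrite NZ ger0_norm.
Qed.

Lemma Bconv l u v :
  Bf (l *: u + (1 - l) *: v) (l *: u + (1 - l) *: v) =
  l * Bf u u + (1 - l) * Bf v v - l * (1 - l) * Bf (u - v) (u - v).
Proof.
rewrite !BDl !BDr !BNl !BNr !BZl !BZr (Bsym v u); ring.
Qed.

End QF.
Arguments Bf {R n} P v w.
Arguments Nf {R n} P v.
Arguments Nge0 {R n} P v.
Arguments NZ {R n} P c v.
Arguments N0 {R n} P.
Arguments BDl {R n P} u v w.
Arguments BDr {R n P} u v w.
Arguments BZl {R n P} c u w.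
Arguments BZr {R n P} c u w.
Arguments Bsym {R n P} Psym u v.
Arguments BNl {R n P} u w.
Arguments BNr {R n P} u w.
Arguments B0l {R n P} w.
Arguments Bge0 {R n P} Ppos v.
Arguments Beq0 {R n P} Ppos v.
Arguments NsqE {R n P} Ppos v.
Arguments BDD {R n P} Psym u v.
Arguments CS {R n P} Psym Ppos u v.
Arguments BleN {R n P} Psym Ppos u v.
Arguments ND {R n P} Psym Ppos u v.
Arguments Nsum {R n P} Psym Ppos m w v.
Arguments Bconv {R n P} Psym l u v.

End Part1.
Import Part1.

Module Part2.
Import Order.TTheory GRing.Theory Num.Theory.
Import numFieldNormedType.Exports.
Local Open Scope ring_scope.
Local Open Scope classical_set_scope.

Lemma fin_max (R : realDomainType) (I : finType) (i0 : I) (F : I -> R) :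
  exists i, forall j, F j <= F i.
Proof.
case: (@arg_maxP _ _ I i0 xpredT F isT) => i _ H.
by exists i => j; apply: H.
Qed.

Section Hull.
Variables (R : realType) (n : nat) (P : 'M[R]_n).
Hypotheses (Psym : P^T = P)
  (Ppos : forall v : 'cV[R]_n, v != 0 -> 0 < (v^T *m P *m v) 0 0).
Local Notation B := (Bf P).
Local Notation N := (Nf P).

Lemma hull_le (S : set 'cV[R]_n) (M : R) p :
  (forall c, S c -> N c <= M) -> conv_hull S p -> N p <= M.
Proof.
move=> hS [m [w [v [w0 [w1 [Sv ->]]]]]].
apply: le_trans (Nsum Psym Ppos _ _ _ w0) _.
rewrite -[M in _ <= M]mul1r -w1 mulr_suml.
by apply: ler_sum => k _; apply: ler_wpM2l => //; apply: hS.
Qed.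

Lemma vertex_max (S : set 'cV[R]_n) (M : R) p :
  (forall c, S c -> N c <= M) -> S p -> N p = M -> vertex_of (conv_hull S) p.
Proof.
move=> hS Sp Np; split.
  exists 1%N, (fun _ => 1), (fun _ => p); split => //; split; first by rewrite big_ord1.
  by split => //; rewrite big_ord1 scale1r.
move=> u v l hu hv /andP[l0 l1] pE.
have M0 : 0 <= M by rewrite -Np; exact: Nge0.
have Bu : B u u <= M ^+ 2.
  by rewrite -(NsqE Ppos); have := hull_le _ _ _ hS hu; have := Nge0 P u; nra.
have Bv : B v v <= M ^+ 2.
  by rewrite -(NsqE Ppos); have := hull_le _ _ _ hS hv; have := Nge0 P v; nra.
have Bp : B p p = M ^+ 2 by rewrite -(NsqE Ppos) Np.
have := Bconv Psym l u v; rewrite -pE Bp => h.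
have h0 := Bge0 Ppos (u - v).
have hz : B (u - v) (u - v) = 0.
  apply/eqP; rewrite eq_le h0 andbT.
  have hl : 0 < l * (1 - l) by rewrite mulr_gt0 // subr_gt0.
  rewrite -(pmulr_rle0 _ hl); nra.
have /eqP := Beq0 Ppos _ hz; rewrite subr_eq0 => /eqP uv.
have pu : p = u by rewrite pE uv -scalerDl addrC subrK scale1r.
by rewrite -pu -uv -pu.
Qed.

Lemma seg_le (p d : 'cV[R]_n) (lo hi s : R) :
  lo <= s <= hi ->
  N (p + s *: d) <= Num.max (N (p + lo *: d)) (N (p + hi *: d)).
Proof.
move=> /andP[ls sh].
case: (eqVneq lo hi) => [e|ne].
  have -> : s = lo by apply/eqP; rewrite eq_le ls andbT e sh.
  by rewrite le_max lexx.
have hl0 : 0 < hi - lo by rewrite subr_gt0 lt_neqAle ne (le_trans ls sh).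
pose l := (hi - s) / (hi - lo).
have l0 : 0 <= l by apply: divr_ge0; [rewrite subr_ge0 | exact: ltW].
have l1 : 0 <= 1 - l.
  by rewrite subr_ge0 ler_pdivrMr // mul1r lerD2l lerN2.
have e : l * lo + (1 - l) * hi = s.
  by rewrite /l; field; rewrite subr_eq0 eq_sym.
have -> : p + s *: d = l *: (p + lo *: d) + (1 - l) *: (p + hi *: d).
  rewrite !scalerDr !scalerA -e scalerDl addrACA -scalerDl.
  by rewrite -scalerDl [l + _]addrC subrK scale1r.
apply: le_trans (ND Psym Ppos _ _) _.
rewrite !(NZ P) !ger0_norm //.
set a := N _; set b := N _.
have ha : a <= Num.max a b by rewrite le_max lexx.
have hb : b <= Num.max a b by rewrite le_max lexx orbT.
nra.
Qed.

Lemma box_le k (p0 : 'cV[R]_n) (M : 'M[R]_(n, k)) (lo hi z : 'cV[R]_k) :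
  (forall i, lo i 0 <= z i 0 <= hi i 0) ->
  exists z' : 'cV[R]_k, (forall i, z' i 0 = lo i 0 \/ z' i 0 = hi i 0) /\
    N (p0 + M *m z) <= N (p0 + M *m z').
Proof.
move=> hz.
suff : forall j : nat, exists z' : 'cV[R]_k, (forall i, lo i 0 <= z' i 0 <= hi i 0) /\
    (forall i : 'I_k, (i < j)%N -> z' i 0 = lo i 0 \/ z' i 0 = hi i 0) /\
    N (p0 + M *m z) <= N (p0 + M *m z').
  by case/(_ k) => z' [_ [h1 h2]]; exists z'; split => // i; apply: h1.
elim => [|j [z' [hb [he hN]]]]; first by exists z; split => //; split.
case: (ltnP j k) => jk; last first.
  exists z'; split => //; split => // i _; apply: he; exact: leq_trans (ltn_ord i) jk.
pose jj := Ordinal jk.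
pose e : 'cV[R]_k := \col_i (if i == jj then 1 else 0).
pose col s := z' + (s - z' jj 0) *: e.
have colE s i : col s i 0 = if i == jj then s else z' i 0.
  rewrite /col /e !mxE; case: eqP => [->|_]; first by rewrite mulr1 addrC subrK.
  by rewrite mulr0 addr0.
pose p := p0 + M *m z' - z' jj 0 *: (M *m e).
have pE s : p0 + M *m col s = p + s *: (M *m e).
  rewrite /col /p mulmxDr -scalemxAr scalerBl !addrA.
  by rewrite [RHS]addrAC.
have hbj := hb jj.
have := seg_le p (M *m e) _ _ _ hbj.
rewrite -pE.
have -> : col (z' jj 0) = z' by rewrite /col subrr scale0r addr0.
rewrite -!pE le_max => /orP[h|h].
- exists (col (lo jj 0)); split; [|split].
  + move=> i; rewrite colE; case: eqP => [->|_]; last exact: hb.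
    by rewrite lexx (le_trans _ (proj2 (andP hbj))) //; case/andP: hbj.
  + move=> i hij; rewrite colE; case: (eqVneq i jj) => [->|ne]; first by left.
    rewrite ltnS leq_eqVlt in hij; case/orP: hij => [/eqP iE|]; last exact: he.
    by move/eqP: ne; case; apply: val_inj.
  + exact: le_trans hN h.
- exists (col (hi jj 0)); split; [|split].
  + move=> i; rewrite colE; case: eqP => [->|_]; last exact: hb.
    by rewrite lexx andbT (le_trans _ (proj2 (andP hbj))) //; case/andP: hbj.
  + move=> i hij; rewrite colE; case: (eqVneq i jj) => [->|ne]; first by right.
    rewrite ltnS leq_eqVlt in hij; case/orP: hij => [/eqP iE|]; last exact: he.
    by move/eqP: ne; case; apply: val_inj.
  + exact: le_trans hN h.
Qed.

End Hull.

End Part2.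
Import Part2.

Module Part3.
Import Order.TTheory GRing.Theory Num.Theory.
Import numFieldNormedType.Exports.
Local Open Scope ring_scope.

Section MX.
Variables (R : realType) (n' : nat).
Local Notation n := n'.+1.
Variable A : 'M[R]_n.

Lemma CH_sum : \sum_(i < n) (char_poly A)`_i *: A ^+ i = - A ^+ n.
Proof.
have hc : (char_poly A)`_n = 1.
  by have /monicP := char_poly_monic A; rewrite lead_coefE size_char_poly.
have e1 i : horner_mx A ((char_poly A)`_i *: 'X^i) = (char_poly A)`_i *: A ^+ i.
  by rewrite horner_mxZ rmorphXn /= horner_mx_X.
have := Cayley_Hamilton A.
rewrite -{1}[char_poly A]coefK poly_def rmorph_sum size_char_poly big_ord_recr /=.
under eq_bigr do rewrite e1.
rewrite e1 hc scale1r => h.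
by apply/eqP; rewrite -addr_eq0 h.
Qed.

Definition compF : 'M[R]_n := \matrix_(k < n, j < n)
  (if (k < n')%N then ((j : nat) == k.+1)%:R else - (char_poly A)`_j).

Lemma shift_mx (h : 'M[R]_n -> 'rV[R]_n)
  (hlin : forall c : 'I_n -> R, h (\sum_(i < n) c i *: A ^+ i) =
                                \sum_(i < n) c i *: h (A ^+ i)) :
  \matrix_(k < n, j < n) (h (A ^+ k.+1)) 0 j =
  compF *m \matrix_(k < n, j < n) (h (A ^+ k)) 0 j.
Proof.
apply/matrixP => k j; rewrite !mxE.
case: (ltnP k n') => kn.
  have kn1 : (k.+1 < n)%N by [].
  rewrite (bigD1 (Ordinal kn1)) //= !mxE kn eqxx mul1r big1 ?addr0 // => l hl.
  rewrite !mxE kn; case: eqP => [e|_]; last by rewrite mul0r.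
  by exfalso; move/eqP: hl; apply; apply: val_inj.
have kE : (k : nat) = n' by apply/eqP; rewrite eqn_leq kn -ltnS ltn_ord.
rewrite kE.
have -> : A ^+ n'.+1 = \sum_(i < n) (- (char_poly A)`_i) *: A ^+ i.
  by under eq_bigr do rewrite scaleNr; rewrite sumrN CH_sum opprK.
rewrite hlin summxE; apply: eq_bigr => l _.
by rewrite !mxE ltnNge kn.
Qed.

Lemma c0A0X (ahat : 'cV[R]_n) k (j : 'I_n) : (k <= j)%N ->
  (c0 R n *m A0 ahat ^+ k) 0 j = ((j : nat) == k)%:R.
Proof.
elim: k j => [|k IH] j kj.
  by rewrite expr0 mulmx1 !mxE; case: eqP.
have j0 : (j : nat) != 0%N by rewrite -lt0n (leq_trans _ kj).
have jp : (0 < j)%N by rewrite lt0n.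
have jn : ((j : nat).-1 < n)%N by rewrite (leq_ltn_trans (leq_pred _)).
rewrite exprSr mulmxA mxE (bigD1 (Ordinal jn)) //= big1 ?addr0.
  rewrite IH /=; last by rewrite -ltnS (prednK jp).
  rewrite !mxE (negbTE j0) (prednK jp) eqxx mulr1.
  by rewrite -(inj_eq succn_inj) (prednK jp).
move=> l hl; rewrite !mxE (negbTE j0).
case: eqP => [e|_]; last by rewrite mulr0.
by exfalso; move/eqP: hl; apply; apply: val_inj => /=; rewrite e.
Qed.


Lemma obsv_shift (c : 'rV[R]_n) : obsv_mx c A *m A = compF *m obsv_mx c A.
Proof.
have -> : obsv_mx c A *m A = \matrix_(k < n, j < n) (c *m A ^+ k.+1) 0 j.
  by apply/row_matrixP => k; rewrite row_mul !rowK exprSr mulmxA.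
rewrite (shift_mx (fun M => c *m M)) //.
by move=> cc; rewrite mulmx_sumr; apply: eq_bigr => i _; rewrite scalemxAr.
Qed.

Definition Kmx (v : 'cV[R]_n) : 'M[R]_n := \matrix_(k < n, i < n) (A ^+ k *m v) i 0.

Lemma K_shift v : Kmx v *m A^T = compF *m Kmx v.
Proof.
have -> : Kmx v *m A^T = \matrix_(k < n, j < n) ((A ^+ k.+1 *m v)^T) 0 j.
  apply/row_matrixP => k; rewrite row_mul rowK exprS -mulmxA.
  set w := A ^+ k *m v.
  have -> : row k (Kmx v) = w^T by apply/rowP => i; rewrite !mxE.
  by rewrite [RHS]trmx_mul.
have -> : Kmx v = \matrix_(k < n, j < n) ((A ^+ k *m v)^T) 0 j.
  by apply/matrixP => k j; rewrite !mxE.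
rewrite (shift_mx (fun M => (M *m v)^T)) //.
move=> cc; rewrite mulmx_suml linear_sum; apply: eq_bigr => i _.
by rewrite -scalemxAl linearZ.
Qed.

Lemma trmxX k : (A^T) ^+ k = (A ^+ k)^T.
Proof.
elim: k => [|k IH]; first by rewrite !expr0 trmx1.
by rewrite exprS IH -mulmxE -trmx_mul mulmxE -exprSr.
Qed.

Lemma ctrb_K (th v : 'cV[R]_n) : (ctrb_mx A th)^T *m v = Kmx v *m th.
Proof.
apply/matrixP => k j; rewrite ord1.
have -> : ((ctrb_mx A th)^T *m v) k 0 = (th^T *m A ^+ k *m v) 0 0.
  rewrite !mxE; apply: eq_bigr => i _; rewrite !mxE trmxX.
  congr (_ * _); apply: eq_bigr => l _; rewrite !mxE mulrC.
  by [].
have -> : (Kmx v *m th) k 0 = (((A ^+ k *m v)^T) *m th) 0 0.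
  by rewrite !mxE; apply: eq_bigr => i _; rewrite !mxE.
have e : (A ^+ k *m v)^T *m th = (th^T *m A ^+ k *m v)^T.
  by rewrite !trmx_mul trmxK mulmxA.
by rewrite e [RHS]mxE.
Qed.

End MX.
Arguments Kmx {R n'} A v.
Arguments compF {R n'} A.
Arguments obsv_shift {R n'} A c.
Arguments K_shift {R n' A} v.
Arguments ctrb_K {R n' A} th v.


Section A0s.
Variables (R : realType) (n' : nat) (ahat : 'cV[R]_n'.+1).
Local Notation n := n'.+1.
Local Notation A := (A0 ahat).
Local Notation C0 := (obsv_mx (c0 R n) A).

Lemma C0_unit : C0 \in unitmx.
Proof.
rewrite unitmxE (det_trig (A := C0)).
  by rewrite big1 ?unitr1 // => i _; rewrite mxE c0A0X // eqxx.
apply/is_trig_mxP => i j ij; rewrite mxE c0A0X ?(ltnW ij) //.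
by rewrite gtn_eqF.
Qed.

Definition Gmx (v : 'cV[R]_n) := invmx C0 *m Kmx A v.

Lemma Emx_G th v : Emx ahat th *m v = Gmx v *m th.
Proof. by rewrite /Emx -mulmxA ctrb_K mulmxA. Qed.

Lemma G_comm v : Gmx v *m A^T = A *m Gmx v.
Proof.
rewrite /Gmx -mulmxA K_shift !mulmxA; congr (_ *m _).
have h := obsv_shift A (c0 R n).
rewrite -[compF A]mulmx1 -(mulmxV C0_unit) [compF A *m _]mulmxA -h.
by rewrite !mulmxA mulVmx ?C0_unit // mul1mx.
Qed.

Lemma G_c0 v : Gmx v *m (c0 R n)^T = v.
Proof.
have e : Kmx A v *m (c0 R n)^T = C0 *m v.
  apply/matrixP => k j; rewrite ord1.
  transitivity ((c0 R n *m (A ^+ k *m v)) 0 0).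
    rewrite !mxE; apply: eq_bigr => i _; rewrite !mxE mulrC.
    by [].
  rewrite mulmxA !mxE; apply: eq_bigr => i _; rewrite !mxE.
  by [].
by rewrite /Gmx -mulmxA e mulmxA mulVmx ?C0_unit // mul1mx.
Qed.

End A0s.

End Part3.
Import Part3.

Module Part4.
Import Order.TTheory GRing.Theory Num.Theory.
Import numFieldNormedType.Exports.
Local Open Scope ring_scope.
Local Open Scope classical_set_scope.

Section Deriv.
Variable R : realType.

Lemma is_derive_mxP m k (f : R -> 'M[R]_(m, k)) (t : R) (df : 'M[R]_(m, k)) :
  is_derive t 1 f df <-> forall i j, is_derive t 1 (fun s => f s i j) (df i j).
Proof.
split => [hd i j|hc].
  have hder : derivable f t 1 := @ex_derive _ _ _ _ _ _ _ hd.
  apply: DeriveDef; first exact: ((derivable_mxP f t 1).1 hder i j).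
  have := derive_mx hder; rewrite (@derive_val _ _ _ _ _ _ _ hd) => ->.
  by rewrite mxE.
have hder : derivable f t 1.
  by apply/derivable_mxP => i j; exact: (@ex_derive _ _ _ _ _ _ _ (hc i j)).
apply: DeriveDef => //; rewrite derive_mx //; apply/matrixP => i j; rewrite mxE.
exact: (@derive_val _ _ _ _ _ _ _ (hc i j)).
Qed.

Lemma is_derive_sumf m (h : 'I_m -> R -> R) (dh : 'I_m -> R) (t : R) :
  (forall i, is_derive t 1 (h i) (dh i)) ->
  is_derive t 1 (fun s => \sum_(i < m) h i s) (\sum_(i < m) dh i).
Proof.
by move=> hd; rewrite -fct_sumE; exact: is_derive_sum.
Qed.

Lemma is_derive_mulmx m p k (M : 'M[R]_(m, p)) (f : R -> 'M[R]_(p, k)) (df : 'M[R]_(p, k)) (t : R) :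
  is_derive t 1 f df -> is_derive t 1 (fun s => M *m f s) (M *m df).
Proof.
move=> /is_derive_mxP hd; apply/is_derive_mxP => i j.
have -> : (fun s => (M *m f s) i j) = (fun s => \sum_(l < p) M i l * f s l j).
  by apply/funext => s; rewrite mxE.
by rewrite mxE; apply: is_derive_sumf => l.
Qed.

Lemma is_deriveDm m k (f g : R -> 'M[R]_(m, k)) (df dg : 'M[R]_(m, k)) (t : R) :
  is_derive t 1 f df -> is_derive t 1 g dg ->
  is_derive t 1 (fun s => f s + g s) (df + dg).
Proof. by move=> hf hg; exact: is_deriveD. Qed.

Lemma is_deriveBm m k (f g : R -> 'M[R]_(m, k)) (df dg : 'M[R]_(m, k)) (t : R) :
  is_derive t 1 f df -> is_derive t 1 g dg ->
  is_derive t 1 (fun s => f s - g s) (df - dg).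
Proof. by move=> hf hg; exact: is_deriveB. Qed.

End Deriv.

Section Cont.
Variables (R : realType) (T : topologicalType).

Lemma contD (f g : T -> R) : continuous f -> continuous g ->
  continuous (fun s => f s + g s).
Proof. by move=> cf cg x; exact: (continuousD (cf x) (cg x)). Qed.

Lemma contM (f g : T -> R) : continuous f -> continuous g ->
  continuous (fun s => f s * g s).
Proof. by move=> cf cg x; exact: (continuousM (cf x) (cg x)). Qed.

Lemma contN (f : T -> R) : continuous f -> continuous (fun s => - f s).
Proof. by move=> cf x; exact: (continuousN (cf x)). Qed.

Lemma cont_cst (c : R) : continuous (fun _ : T => c).
Proof. by move=> x; apply: cvg_cst. Qed.

Lemma cont_sum m (f : 'I_m -> T -> R) : (forall i, continuous (f i)) ->
  continuous (fun s => \sum_(i < m) f i s).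
Proof.
move=> cf; rewrite -fct_sumE.
apply: (big_ind (fun g : T -> R => continuous g)) => //.
- exact: cont_cst.
- by move=> g1 g2 c1 c2; exact: contD.
Qed.

Definition Ccoord m k (f : T -> 'M[R]_(m, k)) :=
  forall i j, continuous (fun s => f s i j).
Arguments Ccoord {m k} f.

Lemma Ccoord_mul m p k (M : 'M[R]_(m, p)) (f : T -> 'M[R]_(p, k)) :
  Ccoord f -> Ccoord (fun s => M *m f s).
Proof.
move=> cf i j.
have -> : (fun s => (M *m f s) i j) = (fun s => \sum_(l < p) M i l * f s l j).
  by apply/funext => s; rewrite mxE.
by apply: cont_sum => l; apply: contM; [exact: cont_cst|exact: cf].
Qed.

Lemma Ccoord_add m k (f g : T -> 'M[R]_(m, k)) :
  Ccoord f -> Ccoord g -> Ccoord (fun s => f s + g s).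
Proof.
move=> cf cg i j.
have -> : (fun s => (f s + g s) i j) = (fun s => f s i j + g s i j).
  by apply/funext => s; rewrite mxE.
exact: contD.
Qed.

Lemma Ccoord_sub m k (f g : T -> 'M[R]_(m, k)) :
  Ccoord f -> Ccoord g -> Ccoord (fun s => f s - g s).
Proof.
move=> cf cg i j.
have -> : (fun s => (f s - g s) i j) = (fun s => f s i j + - g s i j).
  by apply/funext => s; rewrite !mxE.
by apply: contD => //; apply: contN.
Qed.

Lemma Ccoord_of m k (f : T -> 'M[R]_(m, k)) : continuous f -> Ccoord f.
Proof.
move=> cf i j x; apply: (@continuous_comp _ _ _ f (fun M : 'M[R]_(m, k) => M i j)).
  exact: cf.
exact: coord_continuous.
Qed.

End Cont.
Arguments Ccoord {R T m k} f.
Arguments Ccoord_mul {R T m p k} M f.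
Arguments Ccoord_add {R T m k} f g.
Arguments Ccoord_sub {R T m k} f g.
Arguments Ccoord_of {R T m k} f.
Arguments is_derive_mxP {R m k f t df}.
Arguments is_derive_sumf {R m h dh t}.
Arguments is_derive_mulmx {R m p k} M {f df t}.
Arguments is_deriveDm {R m k f g df dg t}.
Arguments is_deriveBm {R m k f g df dg t}.
Arguments contD {R T f g}.
Arguments contM {R T f g}.
Arguments contN {R T f}.
Arguments cont_cst {R T} c.
Arguments cont_sum {R T m f}.

End Part4.
Import Part4.

Module Part5.
Import Order.TTheory GRing.Theory Num.Theory.
Import numFieldNormedType.Exports.
Local Open Scope ring_scope.
Local Open Scope classical_set_scope.

Lemma BfE (R : realType) n (P : 'M[R]_n) (u w : 'cV[R]_n) :
  Bf P u w = \sum_(i < n) u i 0 * (P *m w) i 0.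
Proof.
rewrite /Bf -mulmxA mxE; apply: eq_bigr => i _; by rewrite mxE.
Qed.

Lemma is_derive_exp (R : realType) (c s : R) :
  is_derive s 1 (fun r => expR (c * r)) (expR (c * s) * c).
Proof.
have hg : is_derive s 1 (fun r : R => c * r) c.
  have -> : (fun r : R => c * r) = c \*: (@id R) by apply/funext.
  have h := is_deriveZ c (is_derive_id s 1).
  apply: (is_derive_eq h).
  by rewrite /GRing.scale /= mulr1.
exact: (is_derive1_comp (is_derive_expR (c * s)) hg).
Qed.

Lemma is_deriveMf (R : realType) (f g : R -> R) (s df dg : R) :
  is_derive s 1 f df -> is_derive s 1 g dg ->
  is_derive s 1 (fun r => f r * g r) (f s * dg + g s * df).
Proof. move=> hf hg; exact: (is_deriveM hf hg). Qed.

Lemma main_thm (R : realType) (n' : nat)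
  (a b alo ahi blo bhi ahat : 'cV[R]_n'.+1)
  (ha : forall i, alo i 0 <= a i 0 <= ahi i 0)
  (hb : forall j, blo j 0 <= b j 0 <= bhi j 0)
  (x thy thu : R -> 'cV[R]_n'.+1) (u y : R -> R)
  (hx : forall t : R, 0 < t ->
     is_derive t 1 x (A0 ahat *m x t + y t *: (ahat - a) + u t *: b))
  (hthy : forall t : R, 0 < t ->
     is_derive t 1 thy ((A0 ahat)^T *m thy t + y t *: (@c0 R n'.+1)^T))
  (hthu : forall t : R, 0 < t ->
     is_derive t 1 thu ((A0 ahat)^T *m thu t + u t *: (@c0 R n'.+1)^T))
  (cx : {within `[0, +oo[, continuous x})
  (cthy : {within `[0, +oo[, continuous thy})
  (cthu : {within `[0, +oo[, continuous thu})
  (Q : 'M[R]_n'.+1) (hQ : posdef Q) (alpha : R)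
  (hLMI : negsemidef (A0 ahat *m Q + Q *m (A0 ahat)^T + (2 * alpha) *: Q)) :
  let eps0 := x 0 - xhat ahat (thy 0) (thu 0) (ahat - a) b in
  forall t : R, 0 <= t ->
    exists p, vertex_of
        (conv_hull (corner_points ahat (thy t) (thu t) alo ahi blo bhi)) p /\
      qnorm Q (x t) <= qnorm Q p + expR (- alpha * t) * qnorm Q eps0.
Proof.
move=> eps0 t t0.
set P := invmx Q.
case: hQ => Qsym Qpos.
have Qunit : Q \in unitmx.
  rewrite unitmxE unitfE; apply/negP => /det0P [v vn0 vQ].
  have : v^T != 0 by rewrite trmx_eq0.
  move/Qpos; rewrite trmxK vQ mul0mx mxE ltxx.
  by [].
have Psym : P^T = P by rewrite /P trmx_inv Qsym.
have QP (v : 'cV[R]_n'.+1) : Q *m (P *m v) = v by rewrite mulmxA mulmxV // mul1mx.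
have PQ (v : 'cV[R]_n'.+1) : P *m (Q *m v) = v by rewrite mulmxA mulVmx // mul1mx.
have Ppos : forall v : 'cV[R]_n'.+1, v != 0 -> 0 < (v^T *m P *m v) 0 0.
  move=> v vn0.
  have wn0 : P *m v != 0.
    by apply: contraNneq vn0 => e; rewrite -(QP v) e mulmx0.
  have := Qpos _ wn0.
  by rewrite trmx_mul Psym -mulmxA QP.
pose Gy := Gmx R n' ahat (ahat - a).
pose Gu := Gmx R n' ahat b.
pose xh := fun s : R => Gy *m thy s + Gu *m thu s.
have hxh (s : R) : xhat ahat (thy s) (thu s) (ahat - a) b = xh s.
  by rewrite /xhat !Emx_G.
pose eps := fun s : R => x s - xh s.
have deps (s : R) : 0 < s -> is_derive s 1 eps (A0 ahat *m eps s).
  move=> s0.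
  have h1 := is_derive_mulmx Gy (hthy s s0).
  have h2 := is_derive_mulmx Gu (hthu s s0).
  have h := is_deriveBm (hx s s0) (is_deriveDm h1 h2).
  apply: (is_derive_eq h).
  rewrite !mulmxDr -!scalemxAr !mulmxA !G_comm !G_c0.
  rewrite /eps /xh /Gy /Gu mulmxN mulmxDr !mulmxA.
  move: (A0 ahat *m x s) (A0 ahat *m Gmx R n' ahat (ahat - a) *m thy s)
    (A0 ahat *m Gmx R n' ahat b *m thu s) => X1 X2 X3.
  by apply/matrixP => i j; rewrite !mxE; ring.
have sc (X Y Z : 'M[R]_1) (c : R) : (X + Y + c *: Z) 0 0 = X 0 0 + Y 0 0 + c * Z 0 0.
  by rewrite !mxE.
have LMI (e : 'cV[R]_n'.+1) :
    Bf P (A0 ahat *m e) e + Bf P e (A0 ahat *m e) + 2 * alpha * Bf P e e <= 0.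
  have := hLMI.2 (P *m e).
  suff -> : ((P *m e)^T *m (A0 ahat *m Q + Q *m (A0 ahat)^T + (2 * alpha) *: Q)
     *m (P *m e)) 0 0 = Bf P (A0 ahat *m e) e + Bf P e (A0 ahat *m e) + 2 * alpha * Bf P e e by [].
  rewrite /Bf !trmx_mul Psym !mulmxDr !mulmxDl -!mulmxA QP PQ.
  rewrite -scalemxAl QP -!scalemxAr sc; ring.
pose qf := fun s : R => Bf P (eps s) (eps s).
pose V := fun s : R => expR (2 * alpha * s) * qf s.
have qfE : qf = fun r => \sum_(i < n'.+1) eps r i 0 * (P *m eps r) i 0.
  by apply/funext => r; rewrite /qf BfE.
have dq (s : R) : 0 < s ->
    is_derive s 1 qf (Bf P (eps s) (A0 ahat *m eps s) + Bf P (A0 ahat *m eps s) (eps s)).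
  move=> s0.
  have /is_derive_mxP de := deps s s0.
  have /is_derive_mxP dPe := is_derive_mulmx P (deps s s0).
  rewrite qfE.
  apply: is_derive_eq.
    exact: (is_derive_sumf (h := fun i r => eps r i 0 * (P *m eps r) i 0)).
  rewrite !BfE -big_split /=; apply: eq_bigr => i _ /=.
  rewrite /GRing.scale /=; ring.
have dV (s : R) : 0 < s -> is_derive s 1 V
    (expR (2 * alpha * s) * (Bf P (eps s) (A0 ahat *m eps s) + Bf P (A0 ahat *m eps s) (eps s))
     + qf s * (expR (2 * alpha * s) * (2 * alpha))).
  by move=> s0; apply: is_deriveMf; [exact: is_derive_exp|exact: dq].
have dVle (s : R) : 0 < s -> 'D_1 V s <= 0.
  move=> s0; rewrite (@derive_val _ _ _ _ _ _ _ (dV s s0)).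
  have := LMI (eps s); have := expR_gt0 (2 * alpha * s).
  rewrite /qf; set E := expR _; move=> E0 h.
  have -> : E * (Bf P (eps s) (A0 ahat *m eps s) + Bf P (A0 ahat *m eps s) (eps s)) +
    Bf P (eps s) (eps s) * (E * (2 * alpha)) =
    E * (Bf P (A0 ahat *m eps s) (eps s) + Bf P (eps s) (A0 ahat *m eps s) +
         2 * alpha * Bf P (eps s) (eps s)) by ring.
  by rewrite pmulr_rle0.
have ceps : Ccoord (T := subspace (`[0, +oo[ : set R)) eps.
  have c1 := Ccoord_of (T := subspace (`[0, +oo[ : set R)) x cx.
  have c2 := Ccoord_of (T := subspace (`[0, +oo[ : set R)) thy cthy.
  have c3 := Ccoord_of (T := subspace (`[0, +oo[ : set R)) thu cthu.
  have c4 := Ccoord_add (T := subspace (`[0, +oo[ : set R)) _ _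
    (Ccoord_mul (T := subspace (`[0, +oo[ : set R)) Gy thy c2)
    (Ccoord_mul (T := subspace (`[0, +oo[ : set R)) Gu thu c3).
  have c5 := Ccoord_sub (T := subspace (`[0, +oo[ : set R)) x xh c1 c4.
  exact: c5.
have cV : {within `[0, +oo[, continuous V}.
  apply: contM.
    apply: continuous_subspaceT => r.
    apply: (@continuous_comp _ _ _ (fun s : R => 2 * alpha * s) expR).
      by apply: contM; [exact: cont_cst| move=> z; exact: cvg_id].
    exact: continuous_expR.
  rewrite qfE; apply: cont_sum => i; apply: contM; first exact: ceps.
  exact: (Ccoord_mul (T := subspace (`[0, +oo[ : set R)) P eps ceps).
have hVt : V t <= V 0.
  case: (eqVneq t 0) => [->|tn0]; first exact: lexx.
  have tp : 0 < t by rewrite lt_neqAle eq_sym tn0 t0.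
  apply: (@ler0_derive1_le_cc R V 0 t).
  - move=> r; rewrite in_itv /= => /andP[r0 _].
    exact: (@ex_derive _ _ _ _ _ _ _ (dV r r0)).
  - move=> r; rewrite in_itv /= => /andP[r0 _].
    by rewrite derive1E; exact: dVle.
  - apply: continuous_subspaceW cV.
    exact: subset_itvl.
  - by rewrite in_itv /= lexx t0.
  - by rewrite in_itv /= lexx t0.
  - exact: t0.
have hdec : Nf P (eps t) <= expR (- alpha * t) * Nf P eps0.
  have e0 : eps 0 = eps0 by rewrite /eps /eps0 hxh.
  have V0 : V 0 = qf 0 by rewrite /V mulr0 expR0 mul1r.
  set E := expR (- alpha * t).
  have E2 : E ^+ 2 * expR (2 * alpha * t) = 1.
    rewrite /E -expRM_natl -expRD.
    have -> : 2%:R * (- alpha * t) + 2 * alpha * t = 0 by ring.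
    exact: expR0.
  have hq : qf t <= E ^+ 2 * qf 0.
    rewrite -V0 -[qf t]mul1r -E2 -mulrA; apply: ler_wpM2l; first exact: sqr_ge0.
    exact: hVt.
  have : Num.sqrt (qf t) <= Num.sqrt (E ^+ 2 * qf 0).
    by rewrite ler_sqrt // mulr_ge0 ?sqr_ge0 // /qf (Bge0 Ppos).
  rewrite sqrtrM ?sqr_ge0 // sqrtr_sqr ger0_norm ?expR_ge0 // /qf e0.
  by [].
pose Ey := Emx ahat (thy t).
pose Eu := Emx ahat (thu t).
pose CP := corner_points ahat (thy t) (thu t) alo ahi blo bhi.
pose sel (lo hi : 'cV[R]_n'.+1) (sg : {ffun 'I_n'.+1 -> bool}) : 'cV[R]_n'.+1 :=
  \col_i (if sg i then hi i 0 else lo i 0).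
pose cp (sg : {ffun 'I_n'.+1 -> bool} * {ffun 'I_n'.+1 -> bool}) :=
  xhat ahat (thy t) (thu t) (ahat - sel alo ahi sg.1) (sel blo bhi sg.2).
have [sm hsm] := fin_max _ _ ([ffun _ => false], [ffun _ => false]) (fun sg => Nf P (cp sg)).
have sel_end lo hi sg i : sel lo hi sg i 0 = lo i 0 \/ sel lo hi sg i 0 = hi i 0.
  by rewrite mxE; case: (sg i); [right|left].
have end_sel (lo hi z : 'cV[R]_n'.+1) : (forall i, z i 0 = lo i 0 \/ z i 0 = hi i 0) ->
    z = sel lo hi [ffun i => z i 0 == hi i 0].
  move=> hz; apply/matrixP => i j; rewrite ord1 !mxE ffunE.
  case: (hz i) => e; rewrite e; last by rewrite eqxx.
  by case: eqP => [->|].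
have CPle c : CP c -> Nf P c <= Nf P (cp sm).
  move=> [a' [b' [ha' [hb' ->]]]].
  rewrite (end_sel _ _ a' ha') (end_sel _ _ b' hb').
  exact: (hsm (_, _)).
have CPp : CP (cp sm).
  exists (sel alo ahi sm.1), (sel blo bhi sm.2); split; first exact: sel_end.
  by split; first exact: sel_end.
exists (cp sm); split.
  exact: (vertex_max _ _ _ Psym Ppos _ _ _ CPle CPp erefl).
have ide (z bb : 'cV[R]_n'.+1) :
    Ey *m ahat + Eu *m bb + (- Ey) *m z = xhat ahat (thy t) (thu t) (ahat - z) bb.
  by rewrite /xhat -/Ey -/Eu mulmxBr mulNmx addrAC.
have [a' [ha' h1]] := box_le _ _ _ Psym Ppos _ (Ey *m ahat + Eu *m b) (- Ey) alo ahi a ha.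
have [b' [hb' h2]] := box_le _ _ _ Psym Ppos _ (Ey *m (ahat - a')) Eu blo bhi b hb.
rewrite !ide in h1.
have h3 : Nf P (xh t) <= Nf P (cp sm).
  rewrite -hxh; apply: le_trans h1 _.
  apply: le_trans h2 _.
  apply: CPle; exists a', b'; split => //.
have ex : x t = xh t + eps t by rewrite /eps addrC subrK.
rewrite /qnorm -/P ex.
apply: le_trans (ND Psym Ppos _ _) _.
exact: lerD h3 hdec.
Qed.

End Part5.
Import Part5.

Theorem theorem1 (R : realType) (n : nat) (hn : (0 < n)%N)
  (a b alo ahi blo bhi ahat : 'cV[R]_n)
  (ha : forall i, alo i 0 <= a i 0 <= ahi i 0)
  (hb : forall j, blo j 0 <= b j 0 <= bhi j 0)
  (hstab : strictly_stable (A0 ahat))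
  (x thy thu : R -> 'cV[R]_n) (u y : R -> R)
  (hy : forall t : R, 0 <= t -> y t = (@c0 R n *m x t) 0 0)
  (hx : forall t : R, 0 < t ->
     is_derive t 1 x (A0 ahat *m x t + y t *: (ahat - a) + u t *: b))
  (hthy : forall t : R, 0 < t ->
     is_derive t 1 thy ((A0 ahat)^T *m thy t + y t *: (@c0 R n)^T))
  (hthu : forall t : R, 0 < t ->
     is_derive t 1 thu ((A0 ahat)^T *m thu t + u t *: (@c0 R n)^T))
  (cx : {within `[0, +oo[, continuous x})
  (cthy : {within `[0, +oo[, continuous thy})
  (cthu : {within `[0, +oo[, continuous thu})
  (Q : 'M[R]_n) (hQ : posdef Q) (alpha : R)
  (hLMI : negsemidef (A0 ahat *m Q + Q *m (A0 ahat)^T + (2 * alpha) *: Q)) :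
  let eps0 := x 0 - xhat ahat (thy 0) (thu 0) (ahat - a) b in
  forall t : R, 0 <= t ->
    exists p, vertex_of
        (conv_hull (corner_points ahat (thy t) (thu t) alo ahi blo bhi)) p /\
      qnorm Q (x t) <= qnorm Q p + expR (- alpha * t) * qnorm Q eps0.
Proof.
destruct n as [|n']; first by [].
move=> eps0 t t0.
exact: (@main_thm R n' a b alo ahi blo bhi ahat ha hb x thy thu u y hx hthy hthu cx cthy cthu Q hQ alpha hLMI t t0).
Qed.
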